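(* Let $n \ge 2$ be an integer, $\lambda > 0$ a real number and $C \ge 1$. There exists a constant $C'>0$ depending only on $n$ and $C$ such that the following holds. Let $(p_0,\ldots,p_n) \in \mathbb{Z}^{n+1}$ with $q := p_0 \ge 1$, $C^{-1} q \le |p_i| \le C q$ for all $i$, and $|p_{i-1}p_{i+1} - p_i^2| \le C q^{1-\lambda}$ for all $i \in \{1,\ldots,n-1\}$. Then for all positive integers $m,k$ with $k-m+1 \ge 0$ and $k+m-1 \le n$, the $m\times m$ Hankel matrix $$\Delta_{m,k} = \begin{pmatrix} p_{k-m+1} & p_{k-m+2} & \cdots & p_k \\ p_{k-m+2} & p_{k-m+3} & \cdots & p_{k+1} \\ \vdots & \vdots & \ddots & \vdots \\ p_k & p_{k+1} & \cdots & p_{k+m-1}\end{pmatrix}$$ (whose $(r,s)$ entry is $p_{k-m+r+s-1}$) satisfies $|\det \Delta_{m,k}| \le C' q^{1-(m-1)\lambda}$.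
   Context: The paper writes these statements with Vinogradov notation ($\ll$, $\asymp$); here implied constants are made explicit. *)

(* Defs.v *)
From HB Require Import structures.
From mathcomp Require Import all_boot all_order all_algebra.
From mathcomp Require Import all_classical all_reals all_analysis.
Set Implicit Arguments. Unset Strict Implicit. Unset Printing Implicit Defensive.
Import Order.TTheory GRing.Theory Num.Theory.
Local Open Scope ring_scope.

(* Hankel matrix Delta_{m,k}: 0-based entry (r,s) is p_{k-m+1+r+s}
   (= paper's 1-based entry p_{k-m+r+s-1}). Requires k+1 >= m. *)
Definition hankel (R : ringType) (p : nat -> int) (m k : nat) : 'M[R]_m :=
  \matrix_(r < m, s < m) (p (k.+1 - m + r + s)%N)%:~R.

(* Main.v *)
Require Import Defs.
From HB Require Import structures.
From mathcomp Require Import all_boot all_order all_algebra.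
From mathcomp Require Import all_classical all_reals all_analysis.
Import Order.TTheory GRing.Theory Num.Theory.
Local Open Scope ring_scope.
From mathcomp Require Import perm zify ring lra.
Import Order.TTheory GRing.Theory Num.Theory.
Import Order.TTheory GRing.Theory Num.Theory.
Local Open Scope ring_scope.

Lemma det_bound (R : realDomainType) m (A : 'M[R]_m) (B : 'I_m -> R) :
  (forall i j, `|A i j| <= B i) -> `|\det A| <= m`!%:R * \prod_i B i.
Proof.
move=> hB; rewrite /determinant (le_trans (ler_norm_sum _ _ _)) //.
apply: (@le_trans _ _ (\sum_(s : 'S_m) \prod_i B i)).
  apply: ler_sum => s _.
  rewrite normrM normrX normrN1 expr1n mul1r normr_prod.
  by apply: ler_prod => i _; rewrite normr_ge0 /=.
by rewrite sumr_const card_Sn mulr_natl.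
Qed.

Lemma ratio_bound (R : realFieldType) (n : nat) (C q eps : R) (P : nat -> R) :
  0 < q -> 0 < C ->
  (forall i, (i <= n)%N -> q / C <= `|P i|) ->
  (forall i, (1 <= i)%N -> (i <= n - 1)%N -> `|P i.-1 * P i.+1 - P i ^+ 2| <= eps) ->
  forall a b, (a <= b)%N -> (b < n)%N ->
  `|P b.+1 / P b - P a.+1 / P a| <= (b - a)%:R * (eps * C^+2 / q^+2).
Proof.
move=> hq hC hlow hd a; elim=> [|b IH] hab hbn.
  have -> : a = 0%N by lia.
  by rewrite subrr normr0 mul0r.
have [->|hab'] := eqVneq a b.+1; first by rewrite subrr normr0 subnn mul0r.
have hab2 : (a <= b)%N by lia.
have hq0 : 0 < q / C by rewrite divr_gt0.
have hPb : P b != 0.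
  by rewrite -normr_gt0; apply: lt_le_trans (hlow _ _); [exact hq0| lia].
have hPb1 : P b.+1 != 0.
  by rewrite -normr_gt0; apply: lt_le_trans (hlow _ _); [exact hq0| lia].
have -> : P b.+2 / P b.+1 - P a.+1 / P a =
   (P b * P b.+2 - P b.+1 ^+ 2) / (P b * P b.+1) + (P b.+1 / P b - P a.+1 / P a).
  have hPa : P a != 0.
    by rewrite -normr_gt0; apply: lt_le_trans (hlow _ _); [exact hq0| lia].
  by field; rewrite hPa hPb hPb1.
rewrite (le_trans (ler_normD _ _)) //.
have -> : (b.+1 - a)%:R * (eps * C ^+ 2 / q ^+ 2) =
    eps * C ^+ 2 / q ^+ 2 + (b - a)%:R * (eps * C ^+ 2 / q ^+ 2).
  by rewrite subSn // -natr1 mulrDl mul1r addrC.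
apply: lerD; last exact: IH hab2 (ltnW hbn).
have hd' := hd b.+1 isT ltac:(lia).
rewrite normrM normfV normrM /=.
have h1 := hlow b ltac:(lia); have h2 := hlow b.+1 ltac:(lia).
have hm : (q / C) ^+ 2 <= `|P b| * `|P b.+1|.
  by rewrite expr2; apply: ler_pM => //; apply: ltW.
have -> : eps * C ^+ 2 / q ^+ 2 = eps / (q / C) ^+ 2.
  by rewrite expr_div_n invf_div !mulrA.
apply: ler_pM => //.
rewrite lef_pV2 ?posrE //; last by rewrite exprn_gt0.
by rewrite mulr_gt0 // normr_gt0.
Qed.

Lemma D_bound (R : realFieldType) (n : nat) (C q eps : R) (P : nat -> R) :
  0 < q -> 0 < C -> 0 <= eps ->
  (forall i, (i <= n)%N -> q / C <= `|P i| /\ `|P i| <= C * q) ->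
  (forall i, (1 <= i)%N -> (i <= n - 1)%N -> `|P i.-1 * P i.+1 - P i ^+ 2| <= eps) ->
  forall a b, (a <= b)%N -> (b < n)%N ->
  `|P a * P b.+1 - P a.+1 * P b| <= n%:R * (C ^+ 4 * eps).
Proof.
move=> hq hC he hb hd a b hab hbn.
have hlow : forall i, (i <= n)%N -> q / C <= `|P i| by move=> i hi; case: (hb i hi).
have hq0 : 0 < q / C by rewrite divr_gt0.
have hPb : P b != 0.
  by rewrite -normr_gt0; apply: lt_le_trans (hlow _ _); [exact hq0| lia].
have hPa : P a != 0.
  by rewrite -normr_gt0; apply: lt_le_trans (hlow _ _); [exact hq0| lia].
have -> : P a * P b.+1 - P a.+1 * P b = P a * P b * (P b.+1 / P b - P a.+1 / P a).
  by field; rewrite hPa hPb.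
have hr := @ratio_bound R n C q eps P hq hC hlow hd a b hab hbn.
rewrite !normrM.
have [_ ha] := hb a ltac:(lia).
have [_ hb'] := hb b ltac:(lia).
apply: (@le_trans _ _ ((C * q) * (C * q) * ((b - a)%:R * (eps * C ^+ 2 / q ^+ 2)))).
  by apply: ler_pM => //; apply: ler_pM.
have -> : C * q * (C * q) * ((b - a)%:R * (eps * C ^+ 2 / q ^+ 2)) =
   (b - a)%:R * (C ^+ 4 * eps).
  by field; rewrite gt_eqF.
apply: ler_wpM2r; first by rewrite mulr_ge0 // exprn_ge0 // ltW.
by rewrite ler_nat; lia.
Qed.

Lemma hankel_main (R : realFieldType) (P : nat -> R) (c m' : nat) (Bq Bd : R) :
  (forall i, (i <= c + 2 * m')%N -> `|P i| <= Bq) ->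
  (forall b, (c <= b)%N -> (b < c + 2 * m')%N -> `|P c * P b.+1 - P c.+1 * P b| <= Bd) ->
  `|\det (\matrix_(r < m'.+1, s < m'.+1) P (c + r + s)%N)| * `|P c| ^+ m'
    <= (m'.+1)`!%:R * (Bq * Bd ^+ m').
Proof.
move=> hBq hBd.
set A := \matrix_(r < m'.+1, s < m'.+1) P (c + r + s)%N.
pose L : 'M[R]_m'.+1 := \matrix_(i, j) if i == j then (if i == 0 :> nat then 1 else P c)
   else if (j.+1 == i)%N then - P c.+1 else 0.
have trigL : is_trig_mx L.
  apply/is_trig_mxP => i j hij; rewrite mxE.
  have -> : (i == j) = false by apply/negbTE; rewrite -val_eqE /=; lia.
  have -> : (j.+1 == i)%N = false by apply/negbTE; lia.
  done.
have detL : \det L = P c ^+ m'.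
  rewrite det_trig // big_ord_recl mxE eqxx /= mul1r.
  under eq_bigr => i _ do rewrite mxE eqxx /=.
  by rewrite prodr_const card_ord.
have -> : `|\det A| * `|P c| ^+ m' = `|\det (L *m A)|.
  by rewrite det_mulmx detL normrM normrX mulrC.
pose B (i : 'I_m'.+1) := if i == 0 :> nat then Bq else Bd.
have -> : Bq * Bd ^+ m' = \prod_i B i.
  rewrite big_ord_recl /B /=.
  under eq_bigr => i _ do rewrite /bump /=.
  by rewrite prodr_const card_ord.
apply: det_bound => i j.
rewrite mxE.
have hj := ltn_ord j.
case: i => [[|i'] Hi].
  rewrite (bigD1 ord0) //= big1 ?addr0.
    rewrite !mxE /= mul1r /B /=; apply: hBq; lia.
  move=> l hl; rewrite !mxE.
  have -> : (Ordinal Hi == l) = false by apply/negbTE; rewrite eq_sym.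
  by rewrite /= mul0r.
set i0 := Ordinal Hi.
have Hi1 : (i' < m'.+1)%N by lia.
set i1 : 'I_m'.+1 := Ordinal Hi1.
rewrite (bigD1 i0) // (bigD1 i1) /=; last by rewrite -val_eqE /=; lia.
rewrite big1 ?addr0; last first.
  move=> l /andP [hl0 hl1]; rewrite !mxE.
  have -> : (i0 == l) = false by apply/negbTE; rewrite eq_sym.
  have -> : (l.+1 == i'.+1)%N = false.
    apply/negbTE; apply: contra hl1 => /eqP [] hl. by rewrite -val_eqE /= hl.
  by rewrite mul0r.
rewrite !mxE /= eqxx.
have -> : (i0 == i1) = false by rewrite -val_eqE /=; lia.
rewrite eqxx /B /=.
have -> : (c + i'.+1 + j = (c + i' + j).+1)%N by lia.
rewrite mulNr; apply: hBd; lia.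
Qed.

Theorem proposition4p2 (R : realType) (n : nat) (C : R) :
  (2 <= n)%N -> 1 <= C ->
  exists C' : R, 0 < C' /\
    forall (lambda : R) (p : nat -> int),
      0 < lambda ->
      (1 <= p 0%N)%R ->
      (forall i : nat, (i <= n)%N ->
         C^-1 * (p 0%N)%:~R <= `|(p i)%:~R : R| /\
         `|(p i)%:~R : R| <= C * (p 0%N)%:~R) ->
      (forall i : nat, (1 <= i)%N -> (i <= n - 1)%N ->
         `|((p i.-1 * p i.+1 - p i ^+ 2)%:~R : R)|
           <= C * ((p 0%N)%:~R `^ (1 - lambda))) ->
      forall m k : nat, (0 < m)%N -> (0 < k)%N ->
        (m <= k + 1)%N -> (k + m - 1 <= n)%N ->
        `|\det (hankel R p m k)|
          <= C' * ((p 0%N)%:~R `^ (1 - (m%:R - 1) * lambda)).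
Proof.
move=> hn hC.
have hC0 : 0 < C by apply: lt_le_trans hC.
pose K : R := n%:R * C ^+ 5.
have hK : 1 <= K * C.
  have hn1 : 1 <= n%:R :> R by rewrite ler1n; lia.
  by rewrite /K !mulr_ege1 // exprn_ege1.
have hKC0 : 0 < K * C by apply: lt_le_trans hK.
exists ((n.+1)`!%:R * C * (K * C) ^+ n); split.
  by rewrite !mulr_gt0 // ?exprn_gt0 // ltr0n fact_gt0.
move=> lambda p hl hp0 hb hd m k hm hk hmk hkn.
case: m hm hmk hkn => // m' _ hmk hkn.
pose P : nat -> R := fun i => (p i)%:~R.
pose c := (k.+1 - m'.+1)%N.
have hcn : (c + 2 * m' <= n)%N by rewrite /c; lia.
have hmn : (m' <= n)%N by lia.
have -> : hankel R p m'.+1 k = \matrix_(r < m'.+1, s < m'.+1) P (c + r + s)%N.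
  by apply/matrixP => r s; rewrite !mxE.
have hq1 : 1 <= P 0%N by rewrite /P ler1z.
have hq : 0 < P 0%N by apply: lt_le_trans hq1.
rewrite -/(P 0%N) in hb hd *.
set q := P 0%N in hb hd hq1 hq *.
set u := q `^ (- lambda).
have hu : 0 <= u by apply: powR_ge0.
have e1 : q `^ (1 - lambda) = q * u.
  rewrite powRD; last by apply/implyP => _; rewrite gt_eqF.
  by rewrite powRr1 // ltW.
have e2 : q `^ (1 - ((m'.+1)%:R - 1) * lambda) = q * u ^+ m'.
  rewrite -natr1 addrK.
  have -> : 1 - m'%:R * lambda = 1 + (- lambda) * m'%:R by ring.
  rewrite powRD; last by apply/implyP => _; rewrite gt_eqF.
  by rewrite powRr1 ?ltW // powRrM powR_mulrn.
rewrite e2.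
have hb' : forall i, (i <= n)%N -> q / C <= `|P i| /\ `|P i| <= C * q.
  by move=> i hi; rewrite mulrC; exact: hb.
have hd' : forall i, (1 <= i)%N -> (i <= n - 1)%N ->
    `|P i.-1 * P i.+1 - P i ^+ 2| <= C * (q * u).
  move=> i h1 h2; have := hd i h1 h2.
  by rewrite intrB intrM rmorphXn e1.
have heps : 0 <= C * (q * u) by rewrite !mulr_ge0 // ltW.
have Db := @D_bound R n C q (C * (q * u)) P hq hC0 heps hb' hd'.
have H := @hankel_main R P c m' (C * q) (K * q * u).
have {}H : `|\det (\matrix_(r < m'.+1, s < m'.+1) P (c + r + s)%N)| * `|P c| ^+ m'
    <= (m'.+1)`!%:R * (C * q * (K * q * u) ^+ m').
  apply: H.
    by move=> i hi; have [] := hb' i (leq_trans hi hcn).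
  move=> b hb1 hb2.
  have -> : K * q * u = n%:R * (C ^+ 4 * (C * (q * u))) by rewrite /K; ring.
  apply: Db => //; exact: leq_trans hb2 hcn.
set d := `|\det _| in H *.
have hd0 : 0 <= d by apply: normr_ge0.
have hqC : 0 < q / C by rewrite divr_gt0.
have hlow : (q / C) ^+ m' <= `|P c| ^+ m'.
  apply: lerXn2r; [by rewrite nnegrE ltW | by rewrite nnegrE | ].
  by have [] := hb' c (leq_trans (leq_addr _ _) hcn).
have key : d * (q / C) ^+ m' <=
    ((m'.+1)`!%:R * C * (K * C) ^+ m' * (q * u ^+ m')) * (q / C) ^+ m'.
  apply: le_trans (ler_wpM2l hd0 hlow) _.
  apply: le_trans H _.
  have eqK : K * q * u = K * C * u * (q / C) by field; rewrite gt_eqF.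
  rewrite eqK !exprMn.
  by rewrite le_eqVlt; apply/orP; left; apply/eqP; ring.
rewrite ler_pM2r ?exprn_gt0 // in key.
apply: le_trans key _.
apply: ler_wpM2r; first by rewrite mulr_ge0 ?exprn_ge0 // ltW.
apply: ler_pM.
- by rewrite mulr_ge0 ?ler0n // ltW.
- by rewrite exprn_ge0 // ltW.
- apply: ler_wpM2r; first exact: ltW.
  rewrite ler_nat; apply: leq_fact; exact: hmn.
- exact: ler_weXn2l.
Qed.
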